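(* Every most compact MP-tree on $S$ has at most $n-2$ unlabelled nodes.
   Context: Fix integers $n\ge 2$ and $m\ge 1$, and finite nonempty sets $\Sigma_1,\dots,\Sigma_m$ (the states of characters $1,\dots,m$). A set of species $S=\{S_1,\dots,S_n\}$ is given, each species $S_j$ being an $m$-tuple $(s_{j,1},\dots,s_{j,m})\in\Sigma_1\times\cdots\times\Sigma_m$. A tree on $S$ is a finite unrooted tree (connected acyclic undirected graph) $T$ together with an injective map assigning each species $S_j$ to a node of $T$. Nodes receiving a species are called labelled, the others unlabelled. A fit of $T$ is a map $f$ assigning to every node $v$ a tuple $f(v)\in\Sigma_1\times\cdots\times\Sigma_m$ such that $f(v)=S_j$ whenever $v$ is labelled with $S_j$. The cost of $f$ is $\sum_{\{u,v\}\in E(T)} h(f(u),f(v))$, where $h$ is the Hamming distance. The MP-cost $\mathrm{MP}(T)$ is the minimum cost over all fits of $T$. An MP-tree on $S$ is a tree on $S$ whose MP-cost equals the minimum of $\mathrm{MP}(T)$ over all trees $T$ on $S$. A most compact MP-tree on $S$ is an MP-tree on $S$ having the minimum number of nodes among all MP-trees on $S$. *)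

(* Defs.v *)
From mathcomp Require Import all_boot.
Unset Printing Implicit Defensive.

Section MP.
(* m characters; character i has finite state set Sigma i. *)
Variable m : nat.
Variable Sigma : 'I_m -> finType.

Definition state := {dffun forall i : 'I_m, Sigma i}.

Definition hamming (x y : state) : nat := #|[pred i : 'I_m | x i != y i]|.

Variable n : nat.
Variable S : 'I_n -> state.

Record tree := Tree { nv : nat; adj : rel 'I_nv; lab : 'I_n -> 'I_nv }.

Definition is_tree (T : tree) : Prop :=
  [/\ symmetric (adj T), irreflexive (adj T),
      (forall x y : 'I_(nv T), connect (adj T) x y),
      (forall c : seq 'I_(nv T), uniq c -> 2 < size c -> ~~ cycle (adj T) c)
    & injective (lab T)].

Definition is_fit (T : tree) (f : 'I_(nv T) -> state) : Prop :=
  forall j : 'I_n, f (lab T j) = S j.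

(* each undirected edge {u,v} counted once, via u < v *)
Definition cost (T : tree) (f : 'I_(nv T) -> state) : nat :=
  \sum_(u : 'I_(nv T)) \sum_(v : 'I_(nv T) | (u < v) && adj T u v)
     hamming (f u) (f v).

Definition MP_cost (T : tree) (c : nat) : Prop :=
  (exists f, is_fit T f /\ cost T f = c) /\
  (forall f, is_fit T f -> c <= cost T f).

Definition MP_tree (T : tree) : Prop :=
  is_tree T /\
  exists c, MP_cost T c /\
    (forall (T' : tree) (c' : nat), is_tree T' -> MP_cost T' c' -> c <= c').

Definition most_compact_MP_tree (T : tree) : Prop :=
  MP_tree T /\ (forall T' : tree, MP_tree T' -> nv T <= nv T').

Definition unlabelled_count (T : tree) : nat :=
  #|[pred v : 'I_(nv T) | [forall j : 'I_n, lab T j != v]]|.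

End MP.

(* Main.v *)
Require Import Defs.
From mathcomp Require Import all_boot.
From mathcomp Require Import all_boot zify.
From Stdlib Require Import Classical.
Set Implicit Arguments. Unset Strict Implicit.
Unset Printing Implicit Defensive.

Section Graph.
Variable V : finType.

Definition N (e : rel V) x : {set V} := [set y | e x y].
Definition conn_on (e : rel V) (A : {set V}) :=
  forall x y, x \in A -> y \in A -> connect e x y.
Definition res (e : rel V) (A : {set V}) := forall x y, e x y -> x \in A.
Definition acyc (e : rel V) :=
  forall c : seq V, uniq c -> 2 < size c -> ~~ cycle e c.

Lemma hom_connect (T2 : finType) (r1 : rel V) (r2 : rel T2) (phi : V -> T2) :
  (forall x y, r1 x y -> connect r2 (phi x) (phi y)) ->
  forall x y, connect r1 x y -> connect r2 (phi x) (phi y).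
Proof.
move=> H x y /connectP [p]; elim: p x => [|z p IH] x /=; first by move=> _ ->.
case/andP=> rxz pz ly; exact: connect_trans (H _ _ rxz) (IH _ pz ly).
Qed.

Definition rmv (e : rel V) v : rel V := fun x y => [&& x != v, y != v & e x y].

Lemma remove_leaf e A v w : symmetric e -> irreflexive e ->
  conn_on e A -> N e v = [set w] -> conn_on (rmv e v) (A :\ v).
Proof.
move=> sy ir co Nv x y; rewrite !inE => /andP[xv xA] /andP[yv yA].
have ew : forall z, e v z = (z == w).
  by move=> z; have := f_equal (fun B : {set V} => z \in B) Nv; rewrite !inE.
have wv : w != v by apply/eqP=> wv; have := ew w; rewrite eqxx -{1}wv ir.
pose phi z := if z == v then w else z.
have := @hom_connect _ _ (rmv e v) phi _ _ _ (co _ _ xA yA).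
rewrite /phi (negbTE xv) (negbTE yv); apply=> a b eab.
case: (a =P v) => [av|/eqP av].
  have : b == w by rewrite -ew -av.
  move/eqP=> ->; rewrite (negbTE wv); exact: connect0.
case: (b =P v) => [bv|/eqP bv].
  have : a == w by rewrite -ew sy -bv.
  move/eqP=> ->; exact: connect0.
rewrite /phi ?(negbTE av) ?(negbTE bv); apply: connect1; by rewrite /rmv av bv.
Qed.
Arguments remove_leaf {e A v w}.


Definition supp (e : rel V) v a b : rel V := fun x y =>
  rmv e v x y || ((x == a) && (y == b)) || ((x == b) && (y == a)).

Lemma suppress e A v a b : symmetric e -> irreflexive e ->
  conn_on e A -> N e v = [set a; b] -> a != b ->
  conn_on (supp e v a b) (A :\ v).
Proof.
move=> sy ir co Nv ab x y; rewrite !inE => /andP[xv xA] /andP[yv yA].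
have ew : forall z, e v z = (z == a) || (z == b).
  by move=> z; have := f_equal (fun B : {set V} => z \in B) Nv; rewrite !inE.
have av : a != v by apply/eqP=> av; have := ew a; rewrite eqxx -{1}av ir.
pose phi z := if z == v then a else z.
have := @hom_connect _ _ (supp e v a b) phi _ _ _ (co _ _ xA yA).
rewrite /phi (negbTE xv) (negbTE yv); apply=> c d ecd.
case: (c =P v) => [cv|/eqP cv].
  have : (d == a) || (d == b) by rewrite -ew -cv.
  have dv : d != v by apply/eqP=> dv; move: ecd; rewrite cv dv ir.
  rewrite (negbTE dv).
  case/orP=> /eqP->; first exact: connect0.
  apply: connect1; by rewrite /supp !eqxx orbT.
case: (d =P v) => [dv|/eqP dv].
  have : (c == a) || (c == b) by rewrite -ew sy -dv.
  case/orP=> /eqP->; first exact: connect0.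
  apply: connect1; by rewrite /supp !eqxx !orbT.
rewrite /phi ?(negbTE cv) ?(negbTE dv); apply: connect1; by rewrite /supp /rmv cv dv ecd.
Qed.
Arguments suppress {e A v a b}.


Definition cut (e : rel V) c0 c1 : rel V := fun x y =>
  e x y && ~~ (((x == c0) && (y == c1)) || ((x == c1) && (y == c0))).

Lemma cut_conn e A c0 c1 s : symmetric e -> uniq [:: c0, c1 & s] -> s != [::] ->
  cycle e [:: c0, c1 & s] -> conn_on e A -> conn_on (cut e c0 c1) A.
Proof.
move=> sy u sn cy co x y xA yA.
have sy' : symmetric (cut e c0 c1).
  move=> p q; rewrite /cut sy; congr (_ && ~~ _).
  by rewrite orbC; congr (_ || _); rewrite andbC.
have key : forall z t, all (fun w => (w != c0) && (w != c1)) t -> path e z t ->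
   path (cut e c0 c1) z t.
  move=> z t; elim: t z => [|w t IH] z //= /andP[/andP[w0 w1] al] /andP[ezw pw].
  by rewrite IH // /cut ezw (negbTE w0) (negbTE w1) !andbF.
have c10 : connect (cut e c0 c1) c1 c0.
  move: cy; rewrite /= rcons_path => /and3P[_ ps el].
  apply/connectP; exists (rcons s c0); last by rewrite last_rcons.
  have als : all (fun w => (w != c0) && (w != c1)) s.
    apply/allP=> w ws; move: u => /= /andP[]; rewrite !inE negb_or.
    case/andP=> _ c0s /andP[c1s _].
    by apply/andP; split; apply/eqP=> E; [move: c0s|move: c1s]; rewrite -E ws.
  rewrite rcons_path key //=.
  case: s sn als ps el u => // w s _ /= /andP[_ als] _ el u.
  have lm : last w s \in w :: s by exact: mem_last.
  have l1 : last w s != c1.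
    apply/eqP=> E; move: u => /= /andP[_ /andP[]]; by rewrite -E lm.
  have c01 : c0 != c1 by move: u => /= /andP[]; rewrite inE negb_or => /andP[].
  by rewrite /cut el /= (negbTE l1) (negbTE c01) andbF andFb.
have := co _ _ xA yA; apply: connect_sub => p q epq.
case: (boolP (cut e c0 c1 p q)) => [h|]; first exact: connect1.
rewrite /cut epq /= negbK => /orP[] /andP[/eqP-> /eqP->] //.
by rewrite (sym_connect_sym sy').
Qed.


Lemma path_in (e : rel V) (A : {set V}) (x : V) (p : seq V) : symmetric e -> res e A -> x \in A -> path e x p ->
  all (mem A) (x :: p).
Proof.
move=> sy re; elim: p x => [|y p IH] x xA /=; first by rewrite xA.
case/andP=> exy py; have yA : y \in A by apply: (re y x); rewrite sy.
by rewrite xA; exact: IH.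
Qed.
Arguments path_in {e A x p}.


Lemma deg_pos (e : rel V) (A : {set V}) (x y : V) : conn_on e A -> x \in A -> y \in A -> x != y ->
  0 < #|N e x|.
Proof.
move=> co xA yA xy; have /connectP [p pp ly] := co _ _ xA yA.
case: p pp ly => [|z p] /=; first by move=> _ E; rewrite E eqxx in xy.
case/andP=> exz _ _; apply/card_gt0P; exists z; by rewrite inE.
Qed.
Arguments deg_pos {e A x y}.


Lemma sorted_suffix (e : rel V) (p1 q : seq V) (y : V) : sorted e (p1 ++ y :: q) -> path e y q.
Proof.
case: p1 => [|a p1] //=; rewrite cat_path => /andP[_] /= /andP[_ ->] //.
Qed.

Lemma suffix (e : rel V) (s0 : seq V) (z y : V) : acyc e -> uniq (rcons s0 z) ->
  sorted e (rcons s0 z) -> y \in s0 -> e z y -> exists s1, s0 = rcons s1 y.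
Proof.
move=> ac u so ys ezy; move: u so; case/splitPr: ys => p1 p2 u so.
exists p1; case: p2 u so => [|w p2] u so; first by rewrite cats1.
exfalso; move: u so; rewrite rcons_cat /= => u so.
have U : uniq [:: y, w & rcons p2 z] by move: u; rewrite cat_uniq => /and3P[_ _].
have Sz : 2 < size [:: y, w & rcons p2 z] by rewrite /= size_rcons.
move/negP: (ac _ U Sz); apply.
have := @sorted_suffix e _ _ _ so; rewrite /= rcons_path => /andP[-> pr].
by rewrite /= rcons_path rcons_path pr last_rcons ezy.
Qed.
Arguments suffix {e s0 z y}.


Lemma endpoint (e : rel V) (x : V) (p : seq V) : irreflexive e -> acyc e -> uniq (x :: p) ->
  path e x p -> (forall y, e (last x p) y -> y \in x :: p) ->
  #|N e (last x p)| <= 1.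
Proof.
move=> ir ac u pa H; rewrite leqNgt; apply/negP => /card_gt1P [y1 [y2 [h1 h2 y12]]].
rewrite !inE in h1 h2.
have so : sorted e (x :: p) := pa.
move: u so H h1 h2; rewrite lastI.
set z := last x p; set s0 := belast x p => u so H h1 h2.
have M : forall y, e z y -> y \in s0.
  move=> y ezy; have := H _ ezy; rewrite mem_rcons inE => /orP[/eqP E|//].
  by rewrite E ir in ezy.
have [s1 E1] := suffix ac u so (M _ h1) h1.
have [s2 E2] := suffix ac u so (M _ h2) h2.
have := rcons_inj (etrans (esym E1) E2); case=> _ E.
by rewrite E eqxx in y12.
Qed.
Arguments endpoint {e x p}.


Lemma lp (e : rel V) (A : {set V}) : symmetric e -> irreflexive e -> res e A -> acyc e ->
  forall d x p, #|V| - size p <= d -> uniq (x :: p) -> path e x p -> x \in A ->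
  exists2 v, v \in A & #|N e v| <= 1.
Proof.
move=> sy ir re ac.
have fin : forall x p, uniq (x :: p) -> path e x p -> x \in A ->
    (forall y, e (last x p) y -> y \in x :: p) -> exists2 v, v \in A & #|N e v| <= 1.
  move=> x p u pa xA H; exists (last x p); last exact: endpoint.
  by have /allP := path_in sy re xA pa; apply; exact: mem_last.
elim=> [|d IH] x p hd u pa xA.
  case: (boolP [exists y, e (last x p) y && (y \notin x :: p)]).
    case/existsP => y /andP[ezy yn].
    have u' : uniq (x :: rcons p y) by rewrite -rcons_cons rcons_uniq yn u.
    have h : size (x :: rcons p y) <= #|V| by rewrite -(card_uniqP u') max_card.
    move: h; rewrite /= size_rcons => h; move: hd; rewrite leqn0 subn_eq0 => hd.
    have := leq_trans h hd; by rewrite ltnNge leqnSn.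
  move/existsPn=> H; apply: (fin x p) => // y ey; have := H y; rewrite ey /=.
  by rewrite negbK.
case: (boolP [exists y, e (last x p) y && (y \notin x :: p)]).
  case/existsP => y /andP[ezy yn].
  have u' : uniq (x :: rcons p y) by rewrite -rcons_cons rcons_uniq yn u.
  apply: (IH x (rcons p y)) => //; last by rewrite rcons_path pa.
  rewrite size_rcons subnS; by case: (_ - size p) hd.
move/existsPn=> H; apply: (fin x p) => // y ey; have := H y; rewrite ey /=.
by rewrite negbK.
Qed.
Arguments lp {e A}.


Lemma leaf (e : rel V) (A : {set V}) : symmetric e -> irreflexive e -> res e A -> conn_on e A ->
  acyc e -> 1 < #|A| -> exists v w, v \in A /\ N e v = [set w].
Proof.
move=> sy ir re co ac /card_gt1P [x [y [xA yA xy]]].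
have [v vA dv] : exists2 v, v \in A & #|N e v| <= 1 by apply: (lp sy ir re ac #|V| x [::]) => //; rewrite subn0.
have [z zA zv] : exists2 z, z \in A & z != v.
  case: (x =P v) => [xv|/eqP xv]; last by exists x.
  by exists y => //; rewrite -xv eq_sym.
have := deg_pos co vA zA; rewrite eq_sym => /(_ zv) dp.
have /cards1P [w Nw] : #|N e v| == 1 by rewrite eqn_leq dv dp.
by exists v, w.
Qed.
Arguments leaf {e A}.


Lemma degsum : forall k (e : rel V) (A : {set V}), symmetric e -> irreflexive e -> acyc e ->
  #|A| = k.+1 -> res e A -> conn_on e A ->
  \sum_(x in A) #|N e x| + 2 = 2 * #|A|.
Proof.
elim=> [|k IH] e A sy ir ac cA re co.
  have /cards1P [x Ax] : #|A| == 1 by rewrite cA.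
  rewrite Ax big_set1 cards1.
  suff -> : #|N e x| = 0 by [].
  apply/eqP; rewrite cards_eq0; apply/eqP/setP => y; rewrite !inE.
  apply/negbTE/negP=> exy; have : y \in A by apply: (re y x); rewrite sy.
  by rewrite Ax inE => /eqP E; rewrite E ir in exy.
have [v [w [vA Nv]]] : exists v w, v \in A /\ N e v = [set w].
  by apply: leaf => //; rewrite cA.
have cA' : #|A :\ v| = k.+1 by move: cA; rewrite (cardsD1 v A) vA => -[].
have sy' : symmetric (rmv e v).
  by move=> a b; rewrite /rmv sy; case: (a != v); case: (b != v).
have ir' : irreflexive (rmv e v) by move=> a; rewrite /rmv ir !andbF.
have ac' : acyc (rmv e v).
  move=> c u sc; apply/negP=> cy; move/negP: (ac c u sc); apply.
  by apply: sub_cycle cy => a b /and3P[].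
have re' : res (rmv e v) (A :\ v).
  move=> a b /and3P[av _ eab]; rewrite !inE av; exact: re eab.
have co' := remove_leaf sy ir co Nv.
have := IH _ _ sy' ir' ac' cA' re' co'.
rewrite (big_setD1 _ vA).
have E1 : \sum_(x in A :\ v) #|N e x| =
    \sum_(x in A :\ v) (#|N (rmv e v) x| + e x v).
  apply: eq_bigr => x; rewrite !inE => /andP[xv _].
  rewrite (cardsD1 v (N e x)) addnC inE; congr (_ + _); apply: eq_card => y.
  by rewrite !inE /rmv xv.
have E2 : \sum_(x in A :\ v) (e x v : nat) = #|N e v|.
  rewrite (eq_bigr (fun x => if e x v then 1 else 0)); last by move=> x _; case: (e x v).
  rewrite -big_mkcondr sum1_card; apply: eq_card => x; rewrite unfold_in /= !inE sy.
  case: (boolP (e v x)) => exv; rewrite ?andbF ?andbT //.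
  have -> : x != v by apply/eqP=> E; rewrite E ir in exv.
  by rewrite (re x v) // sy.
rewrite E1 big_split /= E2 Nv cards1 (cardsD1 v A) vA; lia.
Qed.

End Graph.
Section Red.
Variable V : finType.
Variable d : V -> V -> nat.
Hypothesis dtri : forall x y z, d x z <= d x y + d y z.
Variable L : {set V}.

Definition W (e : rel V) := \sum_x \sum_y e x y * d x y.
Definition ecount (e : rel V) := #|[pred p : V * V | e p.1 p.2]|.
Definition Kc := ecount (fun _ _ => true).
Definition valid (A : {set V}) (e : rel V) :=
  [/\ symmetric e, irreflexive e, res e A, L \subset A & conn_on e A].

Lemma ecount_le e : ecount e <= Kc.
Proof. by apply: subset_leq_card; apply/subsetP => p. Qed.

Lemma W_sub (e e' : rel V) : (forall x y, e' x y -> e x y) -> W e' <= W e.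
Proof.
move=> H; apply: leq_sum => x _; apply: leq_sum => y _.
by case: (boolP (e' x y)) => [/H ->|_].
Qed.

Lemma sum_ind a b : \sum_x \sum_y ((x == a) && (y == b)) * d x y = d a b.
Proof.
rewrite (bigD1 a) //= [X in _ + X]big1 => [|x xa]; last first.
  by apply: big1 => y _; rewrite (negbTE xa).
rewrite addn0 (bigD1 b) //= [X in _ + X]big1 => [|y yb]; last by rewrite eqxx (negbTE yb).
by rewrite !eqxx mul1n addn0.
Qed.

Lemma rmv_sym (e : rel V) v : symmetric e -> symmetric (rmv e v).
Proof. by move=> sy a b; rewrite /rmv sy; case: (a != v); case: (b != v). Qed.
Lemma rmv_irr (e : rel V) v : irreflexive e -> irreflexive (rmv e v).
Proof. by move=> ir a; rewrite /rmv ir !andbF. Qed.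

Lemma W_supp (e : rel V) v a b : symmetric e -> irreflexive e ->
  N e v = [set a; b] -> a != b -> W (supp e v a b) <= W e.
Proof.
move=> sy ir Nv ab.
have ew : forall z, e v z = (z == a) || (z == b).
  by move=> z; have := f_equal (fun B : {set V} => z \in B) Nv; rewrite !inE.
have av : (v == a) = false.
  by apply/eqP=> av; have := ew a; rewrite eqxx -{1}av ir.
have bv : (v == b) = false.
  by apply/eqP=> bv; have := ew b; rewrite eqxx orbT -{1}bv ir.
have S1 : W (supp e v a b) <= W (rmv e v) + d a b + d b a.
  rewrite -!sum_ind /W -!big_split /=; apply: leq_sum => x _.
  rewrite -!big_split /=; apply: leq_sum => y _.
  rewrite -!mulnDl leq_mul2r /supp.
  by case: (rmv e v x y); case: ((x == a) && (y == b)); case: ((x == b) && (y == a));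
     rewrite ?orbT.
have S2 : W (rmv e v) + d v a + d a v + d v b + d b v <= W e.
  rewrite -!sum_ind /W -!big_split /=; apply: leq_sum => x _.
  rewrite -!big_split /=; apply: leq_sum => y _.
  rewrite -!mulnDl leq_mul2r /rmv; apply/orP; right.
  case: (x =P v) => [->|/eqP xv]; case: (y =P v) => [->|/eqP yv] /=;
    rewrite ?eqxx ?av ?bv ?(negbTE xv) ?(negbTE yv) ?andbF ?andbT //=.
  - rewrite ew; case: (y =P a) => [->|_]; last by case: (y == b).
    by rewrite (negbTE ab).
  - rewrite sy ew; case: (x =P a) => [->|_]; last by case: (x == b).
    by rewrite (negbTE ab).
  - by case: (e x y).
have t1 := dtri a v b; have t2 := dtri b v a.
lia.
Qed.


Lemma measure_drop (A : {set V}) (e e' : rel V) x k :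
  x \in A -> #|A| * Kc.+1 + ecount e <= k.+1 ->
  #|A :\ x| * Kc.+1 + ecount e' <= k.
Proof.
move=> xA; rewrite (cardsD1 x A) xA add1n mulSn.
have := ecount_le e'; lia.
Qed.

Lemma reduce : forall k (A : {set V}) (e : rel V),
  #|A| * Kc.+1 + ecount e <= k -> valid A e -> 0 < #|L| ->
  exists A' e', [/\ valid A' e', W e' <= W e, acyc e' &
    (forall x, x \in A' -> x \notin L -> 2 < #|N e' x|)].
Proof.
elim=> [|k IH] A e hk [sy ir re LA co] L0.
  have h0 : 0 < #|A| := leq_trans L0 (subset_leq_card LA).
  have h1 : 0 < #|A| * Kc.+1 by rewrite muln_gt0 h0.
  by move: hk; rewrite leqn0 addn_eq0 => /andP[/eqP h2 _]; rewrite h2 in h1.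
have [[c [u sc cy]]|nc] :=
  classic (exists c : seq V, [/\ uniq c, 2 < size c & cycle e c]).
  case: c u sc cy => [|c0 [|c1 [|c2 s]]] // u _ cy.
  have sy' : symmetric (cut e c0 c1).
    move=> p q; rewrite /cut sy; congr (_ && ~~ _).
    by rewrite orbC; congr (_ || _); rewrite andbC.
  have ir' : irreflexive (cut e c0 c1) by move=> p; rewrite /cut ir.
  have re' : res (cut e c0 c1) A by move=> p q /andP[/re].
  have co' := @cut_conn V e A c0 c1 (c2 :: s) sy u isT cy co.
  have e01 : e c0 c1 by move: cy => /= /andP[].
  have lt : ecount (cut e c0 c1) < ecount e.
    apply: proper_card; apply/properP; split.
      by apply/subsetP => p; rewrite !inE /cut => /andP[].
    by exists (c0, c1); rewrite !inE /cut /= ?e01 ?eqxx.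
  have [A' [e' [v' W' ac' H']]] : exists A' e', [/\ valid A' e', W e' <= W (cut e c0 c1), acyc e' &
    (forall x, x \in A' -> x \notin L -> 2 < #|N e' x|)].
    apply: (IH A); [ | by split | by []]. move: hk lt; clear; lia.
  exists A', e'; split => //; apply: leq_trans W' (W_sub _).
  by move=> p q /andP[].
have ac : acyc e.
  move=> c u sc; apply/negP => cy; apply: nc; by exists c.
have [[x [xA xL dx]]|nd] :=
  classic (exists x, [/\ x \in A, x \notin L & #|N e x| <= 2]); last first.
  exists A, e; split => //; move=> x xA xL; rewrite ltnNge; apply/negP => dx.
  by apply: nd; exists x.
have LA' : L \subset A :\ x.
  apply/subsetP => y yL; rewrite !inE (subsetP LA _ yL) andbT.
  by apply/eqP=> E; rewrite -E yL in xL.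
have re' : res (rmv e x) (A :\ x).
  move=> a b /and3P[ax _ eab]; rewrite !inE ax; exact: re eab.
move: dx; rewrite leq_eqVlt => /orP[d2|]; last rewrite ltnS leq_eqVlt => /orP[d1|d0].
- have [a [b [ab Nx]]] := cards2P _ d2.
  have inN : forall z, e x z = (z == a) || (z == b).
    by move=> z; have := f_equal (fun B : {set V} => z \in B) Nx; rewrite !inE.
  have aA : (a \in A) && (a != x).
    have exa : e x a by rewrite inN eqxx.
    rewrite (re a x) /=; first by apply/eqP=> E; rewrite E ir in exa.
    by rewrite sy.
  have bA : (b \in A) && (b != x).
    have exb : e x b by rewrite inN eqxx orbT.
    rewrite (re b x) /=; first by apply/eqP=> E; rewrite E ir in exb.
    by rewrite sy.
  have sy' : symmetric (supp e x a b).
    move=> p q; rewrite /supp rmv_sym //.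
    by rewrite [(q == a) && _]andbC [(q == b) && _]andbC orbAC.
  have ir' : irreflexive (supp e x a b).
    move=> p; rewrite /supp rmv_irr //=.
    case: (p =P a) => [->|/eqP pa]; rewrite ?eqxx ?(negbTE ab) ?(negbTE pa) ?andbF //=.
  have re'' : res (supp e x a b) (A :\ x).
    move=> p q /orP[/orP[/re'//|]|] /andP[/eqP-> _]; by rewrite !inE andbC.
  have co' := suppress sy ir co Nx ab.
  have [A' [e' [v' W' ac' H']]] : exists A' e', [/\ valid A' e', W e' <= W (supp e x a b), acyc e' &
    (forall x, x \in A' -> x \notin L -> 2 < #|N e' x|)].
    apply: (IH (A :\ x)); [exact: measure_drop hk|split|] => //.
  exists A', e'; split => //; apply: leq_trans W' (W_supp _ _ _ _) => //.
- have /cards1P [w Nx] := d1.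
  have co' := remove_leaf sy ir co Nx.
  have [A' [e' [v' W' ac' H']]] : exists A' e', [/\ valid A' e', W e' <= W (rmv e x), acyc e' &
    (forall x, x \in A' -> x \notin L -> 2 < #|N e' x|)].
    apply: (IH (A :\ x)); [exact: measure_drop hk|split|] => //.
      exact: rmv_sym.
    exact: rmv_irr.
  exists A', e'; split => //; apply: leq_trans W' (W_sub _).
  by move=> p q /and3P[].
- have [l lL] : exists l, l \in L by apply/card_gt0P.
  have lA := subsetP LA _ lL.
  have lx : x != l by apply/eqP=> E; rewrite E lL in xL.
  by move: d0 (deg_pos co xA lA lx); case: #|N e x|.
Qed.

End Red.

Section Count.
Variable V : finType.
Variable L : {set V}.

Lemma count_good (A : {set V}) (e : rel V) : valid L A e -> acyc e ->
  (forall x, x \in A -> x \notin L -> 2 < #|N e x|) -> 1 < #|L| ->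
  #|A| + 2 <= 2 * #|L|.
Proof.
move=> [sy ir re LA co] ac H L1.
have AL : #|L| <= #|A| := subset_leq_card LA.
have A1 : 1 < #|A| by apply: leq_trans L1 AL.
have cA : #|A| = (#|A|.-1).+1 by rewrite prednK // ltnW.
have := degsum sy ir ac cA re co.
rewrite (big_setID L) /=.
have lb1 : #|A :&: L| <= \sum_(x in A :&: L) #|N e x|.
  rewrite -sum1_card; apply: leq_sum => x; rewrite inE => /andP[xA _].
  have [y [z [yA zA yz]]] := card_gt1P A1.
  case: (x =P y) => [xy|/eqP xy].
    by apply: (deg_pos co xA zA); rewrite xy.
  exact: (deg_pos co xA yA xy).
have lb2 : #|A :\: L| * 3 <= \sum_(x in A :\: L) #|N e x|.
  rewrite -sum_nat_const; apply: leq_sum => x; rewrite !inE => /andP[xL xA].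
  exact: H.
have := cardsID L A; rewrite (setIidPr LA).
rewrite (setIidPr LA) in lb1.
move=> h1 h2; lia.
Qed.

End Count.

Lemma ex_min (P : nat -> Prop) k : P k -> exists m, P m /\ forall j, P j -> m <= j.
Proof.
have : forall b k, k <= b -> P k -> exists m, P m /\ forall j, P j -> m <= j.
  elim=> [|b IH] k' hk Pk.
    exists k'; split => // j _; by move: hk; rewrite leqn0 => /eqP->.
  case: (classic (exists j, P j /\ j < k')) => [[j [Pj jk]]|Nj].
    apply: (IH j) => //; lia.
  exists k'; split => // j Pj; rewrite leqNgt; apply/negP => jk; apply: Nj; by exists j.
by move=> H; apply: (H k).
Qed.

Lemma sum_enum (V : finType) (A : {set V}) (F : V -> nat) :
  (forall x, x \notin A -> F x = 0) -> \sum_x F x = \sum_(i < #|A|) F (enum_val i).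
Proof.
move=> H; rewrite (bigID (mem A)) /= [X in _ + X]big1 ?addn0; last by move=> x /H.
exact: big_enum_val.
Qed.

Lemma ham_sym m Sigma x y : hamming m Sigma x y = hamming m Sigma y x.
Proof. by apply: eq_card => i; rewrite !inE eq_sym. Qed.

Lemma ham_tri m Sigma x y z :
  hamming m Sigma x z <= hamming m Sigma x y + hamming m Sigma y z.
Proof.
rewrite /hamming -cardUI; apply: leq_trans (leq_addr _ _).
apply: subset_leq_card; apply/subsetP => i; rewrite !inE.
case: (x i =P y i) => [->|] //=.
Qed.

Lemma cost2 m Sigma n (T : tree n) (g : 'I_(nv n T) -> state m Sigma) :
  symmetric (adj n T) -> irreflexive (adj n T) ->
  2 * cost m Sigma n T g =
  \sum_u \sum_v adj n T u v * hamming m Sigma (g u) (g v).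
Proof.
move=> sy ir.
set F := fun u v => adj n T u v * hamming m Sigma (g u) (g v).
have Fs : forall u v, F u v = F v u by move=> u v; rewrite /F sy ham_sym.
have C : cost m Sigma n T g = \sum_(u : 'I_(nv n T)) \sum_(v : 'I_(nv n T)) (u < v) * F u v.
  rewrite /cost; apply: eq_bigr => u _; rewrite big_mkcond; apply: eq_bigr => v _.
  by rewrite /F; case: (u < v); case: (adj n T u v); rewrite ?mul1n ?mul0n.
have E : \sum_(u : 'I_(nv n T)) \sum_(v : 'I_(nv n T)) F u v =
  \sum_(u : 'I_(nv n T)) \sum_(v : 'I_(nv n T)) ((u < v) * F u v) + \sum_(u : 'I_(nv n T)) \sum_(v : 'I_(nv n T)) ((v < u) * F u v).
  symmetry; rewrite -big_split; apply: eq_bigr => u _.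
  rewrite -big_split; apply: eq_bigr => v _ /=.
  case: (ltngtP u v) => huv; rewrite ?mul1n ?mul0n ?addn0 //.
  have -> : u = v by apply: val_inj.
  by rewrite /F ir mul0n.
have B : \sum_(u : 'I_(nv n T)) \sum_(v : 'I_(nv n T)) (v < u) * F u v = cost m Sigma n T g.
  rewrite C exchange_big; apply: eq_bigr => u _; apply: eq_bigr => v _; by rewrite Fs.
by rewrite -/F E B -C mul2n addnn.
Qed.

Unset Implicit Arguments.

Theorem lemma4 (m : nat) (Sigma : 'I_m -> finType) (n : nat)
    (S : 'I_n -> state m Sigma) :
  2 <= n -> 1 <= m -> (forall i : 'I_m, 0 < #|Sigma i|) -> injective S ->
  forall T : tree n, most_compact_MP_tree m Sigma n S T ->
    unlabelled_count n T <= n - 2.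
Proof.
move=> n2 m1 Sig Sinj T [[Htree [c [[[f [Hfit Hcost]] Hmin] Hopt]]] Hcomp].
have [sy ir co ac inj] := Htree.
pose d (x y : 'I_(nv n T)) := hamming m Sigma (f x) (f y).
have dtri : forall x y z, d x z <= d x y + d y z by move=> x y z; exact: ham_tri.
pose L : {set 'I_(nv n T)} := lab n T @: [set: 'I_n].
have cL : #|L| = n by rewrite card_imset // cardsT card_ord.
have v0 : valid L [set: 'I_(nv n T)] (adj n T).
  split; [exact: sy|exact: ir|by move=> x y _; rewrite in_setT|exact: subsetT|by move=> x y _ _; exact: co].
have [A [e [[sy' ir' re' LA co'] We ac' H']]] :=
  reduce dtri (leqnn _) v0 (ltac:(rewrite cL; lia)).
have cnt := count_good (And5 sy' ir' re' LA co') ac' H' (ltac:(rewrite cL; lia)).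
have j0 : 'I_n by exists 0; lia.
have x0A : lab n T j0 \in A by apply: (subsetP LA); apply: imset_f; rewrite in_setT.
have labA : forall j, lab n T j \in A.
  by move=> j; apply: (subsetP LA); apply: imset_f; rewrite in_setT.
pose adj' := fun i j : 'I_#|A| => e (enum_val i) (enum_val j).
pose lab' := fun j => enum_rank_in x0A (lab n T j).
pose T' := Tree n #|A| adj' lab'.
have tree' : is_tree n T'.
  split.
  - by move=> i j; rewrite /= /adj' sy'.
  - by move=> i; rewrite /= /adj' ir'.
  - move=> i j /=.
    have H : forall x y, e x y -> connect adj' (enum_rank_in x0A x) (enum_rank_in x0A y).
      move=> x y exy; apply: connect1; rewrite /adj' !enum_rankK_in //.
        by apply: (re' y x); rewrite sy'.
      exact: (re' x y).
    have := hom_connect H (co' _ _ (enum_valP i) (enum_valP j)).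
    by rewrite !enum_valK_in.
  - move=> cc u sc /=.
    have := ac' (map enum_val cc) (ltac:(by rewrite map_inj_uniq //; apply: enum_val_inj)) (ltac:(by rewrite size_map)).
    by rewrite cycle_map.
  - move=> j1 j2 /= E; apply: inj.
    by have := f_equal (@enum_val _ (mem A)) E; rewrite /lab' !enum_rankK_in.
pose f' := fun i : 'I_#|A| => f (enum_val i).
have fit' : is_fit m Sigma n S T' f'.
  by move=> j; rewrite /f' /= /lab' enum_rankK_in.
have cost' : cost m Sigma n T' f' <= c.
  have h1 := @cost2 m Sigma n T' f' (fun i j => sy' _ _) (fun i => ir' _).
  have h2 := cost2 f sy ir.
  have E : \sum_(u : 'I_#|A|) \sum_(v : 'I_#|A|) adj' u v * hamming m Sigma (f' u) (f' v)
      = W d e.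
    rewrite /W (sum_enum (A := A)); last first.
      move=> x xA; apply: big1 => y _.
      by case: (boolP (e x y)) => // /re'; rewrite (negbTE xA).
    apply: eq_bigr => i _; rewrite (sum_enum (A := A)) //.
    move=> y yA; case: (boolP (e (enum_val i) y)) => // eiy.
    by have := re' y (enum_val i); rewrite sy' eiy (negbTE yA) => /(_ isT).
  have : W d e <= W d (adj n T) := We.
  rewrite -E /W.
  move: h1 h2; rewrite /= => h1 h2.
  rewrite -h1.
  have -> : \sum_x \sum_y adj n T x y * d x y = 2 * cost m Sigma n T f by rewrite h2.
  rewrite Hcost; lia.
have [c' [[g [gfit gc]] gmin]] :
    exists c', (exists g, is_fit m Sigma n S T' g /\ cost m Sigma n T' g = c') /\
      forall j, (exists g, is_fit m Sigma n S T' g /\ cost m Sigma n T' g = j) -> c' <= j.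
  by apply: (ex_min (k := cost m Sigma n T' f')); exists f'.
have mp' : MP_tree m Sigma n S T'.
  split => //; exists c'; split.
    split; first by exists g.
    by move=> h hfit; apply: gmin; exists h.
  move=> T'' c'' t'' mp''; apply: leq_trans (Hopt _ _ t'' mp'').
  apply: leq_trans cost'; apply: gmin; by exists f'.
have := Hcomp T' mp'; rewrite /= => hnv.
have -> : unlabelled_count n T = nv n T - #|L|.
  rewrite /unlabelled_count.
  have -> : #|[pred v : 'I_(nv n T) | [forall j, lab n T j != v]]| = #|~: L|.
    apply: eq_card => v; rewrite !inE.
    apply/forallP/negP => [H /imsetP [j _ E]|H j].
      by move: (H j); rewrite E eqxx.
    by apply/eqP=> E; apply: H; apply/imsetP; exists j; rewrite ?in_setT.
  by have := cardsC L; rewrite card_ord; lia.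
have hnv' : nv n T <= #|A| := hnv.
rewrite cL; move: cnt; rewrite cL => cnt; lia.
Qed.
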